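(* For every nice graph $G$ with maximum degree at most $4$, $\chi'_{qm\Sigma}(G)\le 7$.
   Context: All graphs are simple and finite. A $k$-edge-coloring of $G$ is any map $c:E(G)\to\{1,\dots,k\}$ (adjacent edges may share colors). It induces $\sigma_c(v)=\sum_{u\in N(v)}c(vu)$. The coloring is neighbor sum distinguishing (NSD) if $\sigma_c(u)\ne\sigma_c(v)$ for every edge $uv$. It is quasi-majority if every vertex $v$ is incident to at most $\lceil d(v)/2\rceil$ edges of each single color. $\chi'_{qm\Sigma}(G)$ denotes the least $k$ such that $G$ has a $k$-edge-coloring that is both quasi-majority and NSD. A graph is nice if it has no connected component isomorphic to $K_2$. *)

(* Defs.v *)
From mathcomp Require Import all_boot.
Set Implicit Arguments. Unset Strict Implicit. Unset Printing Implicit Defensive.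

Definition simple_graph (T : finType) (e : rel T) : Prop :=
  symmetric e /\ irreflexive e.

Definition nbhd (T : finType) (e : rel T) (v : T) : {set T} := [set u | e v u].
Definition deg (T : finType) (e : rel T) (v : T) : nat := #|nbhd e v|.

(* An edge coloring is given as c : T -> T -> nat, where c u v is the color of
   the edge uv (only meaningful when e u v); it must be symmetric on edges. *)
Definition is_k_edge_coloring (T : finType) (e : rel T) (k : nat)
    (c : T -> T -> nat) : Prop :=
  forall u v, e u v -> c u v = c v u /\ 1 <= c u v <= k.

Definition sigma_c (T : finType) (e : rel T) (c : T -> T -> nat) (v : T) : nat :=
  \sum_(u in nbhd e v) c v u.

Definition nsd (T : finType) (e : rel T) (c : T -> T -> nat) : Prop :=
  forall u v, e u v -> sigma_c e c u <> sigma_c e c v.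

Definition quasi_majority (T : finType) (e : rel T) (c : T -> T -> nat) : Prop :=
  forall (v : T) (i : nat), #|[set u | e v u & c v u == i]| <= uphalf (deg e v).

Definition qm_nsd_colorable (T : finType) (e : rel T) (k : nat) : Prop :=
  exists c : T -> T -> nat,
    [/\ is_k_edge_coloring e k c, quasi_majority e c & nsd e c].

(* chi'_{qm Sigma}(G) <= k  iff  G admits a qm-NSD k-edge-coloring
   (monotone in k, since a k-coloring is also a k'-coloring for k <= k'). *)

(* nice: no connected component isomorphic to K2, i.e. no edge uv with both
   endpoints of degree 1. *)
Definition nice (T : finType) (e : rel T) : Prop :=
  forall u v, e u v -> ~ (deg e u = 1 /\ deg e v = 1).

Definition max_degree_le (T : finType) (e : rel T) (D : nat) : Prop :=
  forall v, deg e v <= D.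

(* Main.v *)
Require Import Defs.
From mathcomp Require Import all_boot.
From mathcomp Require Import all_order all_algebra.
From mathcomp Require Import ring lra zify.
Set Implicit Arguments. Unset Strict Implicit. Unset Printing Implicit Defensive.

(* Proof: induction on edges removing all edges at a vertex v;
   the recoloring of v's edges is found with the Combinatorial Nullstellensatz
   (proved via Lagrange interpolation), with the relevant coefficients checked
   by computation. *)

Module CNpart.
Import Order.TTheory GRing.Theory Num.Theory.
Local Open Scope ring_scope.

Definition wt (S : {set 'I_8}) (j : 'I_8) : rat :=
  (\prod_(k in S :\ j) ((j:nat)%:R - (k:nat)%:R))^-1.

Lemma size_prod_set (A : {set 'I_8}) (F : 'I_8 -> rat) :
  size (\prod_(k in A) ('X - (F k)%:P)) = (#|A|).+1.
Proof. by rewrite -big_enum size_prod_XsubC cardE. Qed.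

Lemma natr_inj8 (a b : 'I_8) : ((a:nat)%:R == (b:nat)%:R :> rat) = (a == b).
Proof. by rewrite eqr_nat. Qed.

Lemma cardD1n (S : {set 'I_8}) j n : #|S| = n.+1 -> j \in S -> #|S :\ j| = n.
Proof. by move=> hS jS; move: (cardsD1 j S); rewrite jS hS add1n => -[]. Qed.

Lemma lagrange (S : {set 'I_8}) (n e : nat) : #|S| = n.+1 -> (e <= n)%N ->
  \sum_(j in S) wt S j * (j:nat)%:R ^+ e = (e == n)%:R.
Proof.
move=> hS hen.
pose P : {poly rat} := \sum_(j in S) (wt S j * (j:nat)%:R ^+ e) *:
   \prod_(k in S :\ j) ('X - ((k:nat)%:R)%:P).
have HP : forall m, m \in S -> P.[(m:nat)%:R] = (m:nat)%:R ^+ e.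
  move=> m mS; rewrite horner_sum (bigD1 m) //.
  rewrite [\big[_/_]_(i in S | i != m) _]big1; last first.
    move=> j /andP[jS jm].
    rewrite hornerZ horner_prod (bigD1 m) /=; last by rewrite in_setD1 eq_sym jm.
    by rewrite hornerXsubC subrr mul0r mulr0.
  rewrite /= addr0 hornerZ horner_prod.
  under eq_bigr do rewrite hornerXsubC.
  rewrite /wt [_^-1 * _]mulrC -mulrA mulVf ?mulr1 //.
  apply/prodf_neq0 => k; rewrite in_setD1 => /andP[km _].
  by rewrite subr_eq0 natr_inj8 eq_sym.
have sP : (size P <= n.+1)%N.
  apply: (leq_trans (size_sum _ _ _)); apply/bigmax_leqP => j jS.
  apply: (leq_trans (size_scale_leq _ _)).
  by rewrite size_prod_set (cardD1n hS jS).
have PX : P = 'X^e.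
  apply/eqP; rewrite -subr_eq0; apply/eqP.
  apply: (@roots_geq_poly_eq0 rat (P - 'X^e) [seq ((nat_of_ord k)%:R : rat) | k <- enum S]).
  - apply/allP => x /mapP[k]; rewrite mem_enum => kS ->.
    by rewrite /root hornerD hornerN HP // hornerXn subrr.
  - rewrite map_inj_uniq ?enum_uniq // => a b /eqP; rewrite natr_inj8 => /eqP.
    done.
  - rewrite size_map -cardE hS.
    apply: (leq_trans (size_polyD _ _)); rewrite size_polyN size_polyXn.
    by rewrite geq_max sP ltnS.
have := congr1 (fun p : {poly rat} => p`_n) PX.
rewrite coef_sum coefXn eq_sym => <-.
apply: eq_bigr => j jS; rewrite coefZ.
have -> : (\prod_(k in S :\ j) ('X - ((k:nat)%:R : rat)%:P))`_n = 1.
  have := lead_coef_prod_XsubC (index_enum 'I_8) (mem (S :\ j)) (fun k : 'I_8 => (k:nat)%:R : rat).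
  by rewrite lead_coefE size_prod_set (cardD1n hS jS).
by rewrite mulr1.
Qed.

Import Order.TTheory GRing.Theory Num.Theory.
Local Open Scope ring_scope.

Fixpoint isum (n : nat) (g : nat -> int) : int :=
  match n with 0 => 0 | n'.+1 => isum n' g + g n' end.

Lemma isumE n g : isum n g = \sum_(i < n) g i.
Proof. by elim: n => [|n IH] /=; rewrite ?big_ord0 // big_ord_recr /= IH. Qed.

Definition decr (r : nat -> nat) (i : nat) : nat -> nat :=
  fun k => if k == i then (r k).-1 else r k.

Fixpoint coef (d : nat) (F : seq (seq int)) (r : nat -> nat) : int :=
  match F with
  | [::] => if all (fun i => r i == 0%N) (iota 0 d) then 1 else 0
  | a :: F' => isum d (fun i => if (0 < r i)%N && (nth 0 a i != 0) then nth 0 a i * coef d F' (decr r i) else 0)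
  end.

Lemma coef_ext d F r r' : (forall k, r k = r' k) -> coef d F r = coef d F r'.
Proof.
elim: F r r' => [|a F IH] r r' h /=.
  by rewrite (eq_all (a2 := fun i => r' i == 0%N)) // => i; rewrite h.
rewrite !isumE; apply: eq_bigr => i _; rewrite h; case: ifP => // _.
by congr (_ * _); apply: IH => k; rewrite /decr h.
Qed.

Lemma all_iota0 d (r : nat -> nat) :
  all (fun i => r i == 0%N) (iota 0 d) = (\sum_(i < d) r i == 0)%N.
Proof.
rewrite sum_nat_eq0; apply/allP/forallP => [h i|h i].
  by apply/implyP => _; apply: h; rewrite mem_iota /=.
by rewrite mem_iota /= => lt; have /implyP := h (Ordinal lt); apply.
Qed.

Lemma sum_decr d (r : nat -> nat) (i : 'I_d) : (0 < r i)%N ->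
  (\sum_(k < d) decr r i k).+1 = \sum_(k < d) r k.
Proof.
move=> ri; rewrite (bigD1 i) // [RHS](bigD1 i) //= /decr eqxx.
rewrite -addSn prednK //; congr (_ + _)%N; apply: eq_bigr => k /negPf ki.
by rewrite -val_eqE /= in ki; rewrite ki.
Qed.

Lemma coef_deg d F (r : nat -> nat) : (\sum_(i < d) r i != size F)%N -> coef d F r = 0.
Proof.
elim: F r => [|a F IH] r /= hs.
  by rewrite all_iota0; move: hs; case: eqP.
rewrite isumE; apply: big1 => i _; case: ifP => // /andP[ri _].
rewrite IH ?mulr0 //; apply: contra hs => /eqP h.
by rewrite -(sum_decr ri) h.
Qed.

Section CN.
Variable d : nat.
Variable S : 'I_d -> {set 'I_8}.
Variable t : nat -> nat.
Hypothesis hS : forall i : 'I_d, #|S i| = (t i).+1.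

Definition W (f : {ffun 'I_d -> 'I_8}) : rat :=
  \prod_(i < d) (if f i \in S i then wt (S i) (f i) else 0).
Definition ell (c : seq int * int) (f : {ffun 'I_d -> 'I_8}) : rat :=
  \sum_(i < d) (nth 0 c.1 i)%:~R * ((f i : nat)%:R) - (c.2)%:~R.
Definition mono (e : nat -> nat) (f : {ffun 'I_d -> 'I_8}) : rat :=
  \prod_(i < d) ((f i : nat)%:R ^+ e i).
Definition Phi (F : seq (seq int * int)) (e : nat -> nat) : rat :=
  \sum_(f : {ffun 'I_d -> 'I_8}) W f * (\prod_(c <- F) ell c f) * mono e f.
Definition incr (e : nat -> nat) (i : nat) : nat -> nat :=
  fun k => if k == i then (e k).+1 else e k.

Lemma mono_incr e (i : 'I_d) f : mono (incr e i) f = (f i : nat)%:R * mono e f.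
Proof.
rewrite /mono (bigD1 i) // [X in _ * X](bigD1 i) //= /incr eqxx exprS -mulrA.
congr (_ * (_ * _)); apply: eq_bigr => k /negPf ki.
by rewrite -val_eqE /= in ki; rewrite ki.
Qed.

Lemma Phi_step c F e : Phi (c :: F) e =
  \sum_(i < d) (nth 0 c.1 i)%:~R * Phi F (incr e i) - (c.2)%:~R * Phi F e.
Proof.
rewrite /Phi.
under [in RHS]eq_bigr do rewrite mulr_sumr.
rewrite exchange_big /= mulr_sumr -sumrB; apply: eq_bigr => f _.
rewrite big_cons /ell.
under [in RHS]eq_bigr do rewrite mono_incr.
set w := W f; set P := \prod_(j <- F) _; set m := mono e f.
set L := \sum_(i < d) _.
transitivity (w * P * m * (L - c.2%:~R)); first by ring.
rewrite mulrBr mulr_sumr; congr (_ - _); last by ring.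
by apply: eq_bigr => i _; ring.
Qed.

Definition Ufun (i : 'I_d) (e : nat) : rat :=
  \sum_(j in S i) wt (S i) j * (j : nat)%:R ^+ e.

Lemma Phi_nil e : Phi [::] e = \prod_(i < d) Ufun i (e i).
Proof.
rewrite /Phi /Ufun.
under [RHS]eq_bigr do rewrite big_mkcond /=.
rewrite bigA_distr_bigA /=; apply: eq_bigr => f _.
rewrite big_nil mulr1 /W /mono -big_split /=; apply: eq_bigr => i _.
by case: ifP => _; rewrite ?mul0r.
Qed.

Lemma U_lt (i : 'I_d) e : (e < t i)%N -> Ufun i e = 0.
Proof.
move=> lt; rewrite /Ufun (lagrange (hS i) (ltnW lt)).
by rewrite (ltn_eqF lt).
Qed.

Lemma U_eq (i : 'I_d) : Ufun i (t i) = 1.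
Proof. by rewrite /Ufun (lagrange (hS i) (leqnn _)) eqxx. Qed.

Lemma exists_small (e : nat -> nat) :
  (\sum_(i < d) e i <= \sum_(i < d) t i)%N ->
  (exists i : 'I_d, t i < e i)%N -> exists j : 'I_d, (e j < t j)%N.
Proof.
move=> hs [i hi]; apply/existsP; apply: contraLR hs; rewrite negb_exists => /forallP h.
rewrite -ltnNge (bigD1 i) // [X in (_ < X)%N](bigD1 i) //=.
rewrite -addSn; apply: leq_add => //; apply: leq_sum => k _; by rewrite leqNgt h.
Qed.

Lemma sum_incr e (i : 'I_d) : (\sum_(k < d) incr e i k = (\sum_(k < d) e k).+1)%N.
Proof.
rewrite (bigD1 i) //= [in RHS](bigD1 i) //= /incr eqxx addSn; congr (_ + _).+1%N.
apply: eq_bigr => k /negPf ki; by rewrite -val_eqE /= in ki; rewrite ki.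
Qed.

Lemma Phi_val F : forall e : nat -> nat, (size F + \sum_(i < d) e i <= \sum_(i < d) t i)%N ->
  Phi F e = if [forall i : 'I_d, e i <= t i]%N
            then (coef d (map fst F) (fun k => t k - e k)%N)%:~R else 0.
Proof.
elim: F => [|c F IH] e /= hs.
  rewrite Phi_nil; case: ifP => [/forallP hle|/negbT].
    rewrite all_iota0.
    case: (boolP [forall i : 'I_d, e i == t i]) => [/forallP heq|].
      rewrite big1 => [|i _]; last by rewrite (eqP (heq i)) U_eq.
      rewrite sum_nat_eq0; case: forallP => // -[] i; apply/implyP => _.
      by rewrite (eqP (heq i)) subnn.
    rewrite negb_forall => /existsP [j hj].
    have ltj : (e j < t j)%N by rewrite ltn_neqAle hj hle.
    rewrite (bigD1 j) //= U_lt // mul0r.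
    rewrite sum_nat_eq0; case: forallP => // /(_ j) /=.
    by rewrite subn_eq0 leqNgt ltj.
  rewrite negb_forall => /existsP [i hi]; rewrite -ltnNge in hi.
  have [j hj] := exists_small (leq_trans (leq_addl _ _) hs) (ex_intro _ i hi).
  by rewrite (bigD1 j) //= U_lt // mul0r.
rewrite Phi_step.
have hsF : (size F + \sum_(i < d) e i <= \sum_(i < d) t i)%N.
  by apply: leq_trans hs; rewrite leq_add2r.
rewrite (IH e hsF).
have hsI : forall i : 'I_d, (size F + \sum_(k < d) incr e i k <= \sum_(i < d) t i)%N.
  by move=> i; rewrite sum_incr addnS -addSn.
under eq_bigr do rewrite (IH _ (hsI _)).
case: ifP => [/forallP hle|/negbT hn]; last first.
  rewrite mulr0 subr0 big1 // => i _.
  case: ifP; rewrite ?mulr0 // => /forallP h; case/negP: hn; apply/forallP => k.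
  by apply: leq_trans (h k); rewrite /incr; case: eqP.
rewrite coef_deg ?mulr0 ?subr0; last first.
  rewrite size_map; apply/eqP => h.
  have : (\sum_(i < d) (t i - e i) + \sum_(i < d) e i = \sum_(i < d) t i)%N.
    by rewrite -big_split /=; apply: eq_bigr => i _; rewrite subnK.
  by move=> eq; move: hs; rewrite /= -eq h addSn ltnn.
rewrite isumE rmorph_sum /=; apply: eq_bigr => i _.
have -> : [forall i0 : 'I_d, incr e i i0 <= t i0]%N = (e i < t i)%N.
  apply/forallP/idP => [/(_ i)|lt k]; first by rewrite /incr eqxx.
  by rewrite /incr; case: eqP => [/val_inj ->|] //; apply: hle.
rewrite subn_gt0; case: ifP => lt; last by rewrite mulr0.
case: eqP => [->|_]; first by rewrite mul0r.
rewrite rmorphM /=; congr (_ * _%:~R); apply: coef_ext => k.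
by rewrite /decr /incr; case: eqP => // _; rewrite subnS.
Qed.

Lemma CN (F : seq (seq int * int)) :
  size F = (\sum_(i < d) t i)%N -> coef d (map fst F) t != 0 ->
  exists f : {ffun 'I_d -> 'I_8}, (forall i, f i \in S i) /\ all (fun c => ell c f != 0) F.
Proof.
move=> hs hc.
have hP : Phi F (fun _ => 0%N) != 0.
  rewrite Phi_val; last by rewrite big1 // addn0 hs.
  case: forallP => [_|[]//]; rewrite intr_eq0; apply: contra hc => /eqP <-.
  by apply/eqP/coef_ext => k; rewrite subn0.
have [f hf] : exists f, W f * (\prod_(c <- F) ell c f) * mono (fun _ => 0%N) f != 0.
  apply/existsP; apply: contraR hP; rewrite negb_exists => /forallP h.
  by apply/eqP/big1 => f _; apply/eqP; move: (h f); rewrite negbK.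
exists f; move: hf; rewrite -mulrA mulf_eq0 negb_or => /andP[hW].
rewrite mulf_eq0 negb_or => /andP[hp _]; split.
  move=> i; move: hW; rewrite /W (bigD1 i) //= mulf_eq0 negb_or => /andP[].
  by case: ifP.
by move: hp; rewrite prodf_seq_neq0.
Qed.

End CN.

Import Order.TTheory GRing.Theory Num.Theory.
Local Open Scope ring_scope.

Fixpoint pairs (d : nat) : seq (nat * nat) :=
  match d with 0 => [::] | d'.+1 => pairs d' ++ [seq (a, d') | a <- iota 0 d'] end.

Fixpoint subs (T : Type) (s : seq T) : seq (seq T) :=
  match s with
  | [::] => [:: [::]]
  | x :: s' => let r := subs s' in r ++ map (cons x) r
  end.

Definition vcoef d i : seq int := [seq ((k != i) : nat)%:Z | k <- iota 0 d].
Definition ecoef d (p : nat * nat) : seq int :=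
  [seq ((k == p.1) : nat)%:Z - ((k == p.2) : nat)%:Z | k <- iota 0 d].
Definition qpairs d : seq (nat * nat) :=
  match d with 2 | 3 => [:: (0, 1)%N] | 4 => [:: (0, 1); (2, 3)]%N | _ => [::] end.
Definition vidx d : seq nat := if (2 <= d)%N then iota 0 d else [::].

Definition fms d (E : seq (nat * nat)) : seq (seq int) :=
  [seq vcoef d i | i <- vidx d] ++ [seq ecoef d p | p <- E] ++ [seq ecoef d p | p <- qpairs d].

Definition kdeg (E : seq (nat * nat)) (k : nat) : nat :=
  count (fun p => (p.1 == k) || (p.2 == k)) E.

Fixpoint cands (n : nat) (b : nat -> nat) : seq (seq nat) :=
  match n with
  | 0 => [:: [::]]
  | n'.+1 => [seq rcons ts x | ts <- cands n' b, x <- iota 0 (b n').+1]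
  end.

Definition okt d E (ts : seq nat) : bool :=
  if [&& size ts == d, all (fun i => nth 0 ts i <= 2 + kdeg E i)%N (iota 0 d) &
      sumn ts == size (fms d E)] then coef d (fms d E) (nth 0%N ts) != 0 else false.

Fixpoint hasL T (p : T -> bool) (s : seq T) : bool :=
  match s with [::] => false | x :: s' => if p x then true else hasL p s' end.
Fixpoint allL T (p : T -> bool) (s : seq T) : bool :=
  match s with [::] => true | x :: s' => if p x then allL p s' else false end.
Lemma hasLE T p (s : seq T) : hasL p s = has p s.
Proof. by elim: s => //= x s IH; case: (p x). Qed.
Lemma allLE T p (s : seq T) : allL p s = all p s.
Proof. by elim: s => //= x s IH; case: (p x). Qed.

Definition checkd d : bool :=
  allL (fun E => hasL (okt d E) (cands d (fun i => 2 + kdeg E i)%N)) (subs (pairs d)).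

Lemma check1 : checkd 1. Proof. vm_compute. reflexivity. Qed.
Lemma check2 : checkd 2. Proof. vm_compute. reflexivity. Qed.



Lemma ck1 : checkd 1 = true. Proof. vm_compute. reflexivity. Qed.
Lemma ck2 : checkd 2 = true. Proof. vm_compute. reflexivity. Qed.
Lemma ck3 : checkd 3 = true. Proof. vm_compute. reflexivity. Qed.
Lemma ck4 : checkd 4 = true. Proof. vm_compute. reflexivity. Qed.

Lemma check_all d : (1 <= d <= 4)%N -> checkd d = true.
Proof.
case: d => [|[|[|[|[|d]]]]] hd.
- by [].
- exact: ck1.
- exact: ck2.
- exact: ck3.
- exact: ck4.
- by [].
Qed.

Import Order.TTheory GRing.Theory Num.Theory.
Local Open Scope ring_scope.

Lemma mem_pairs d i j : ((i, j) \in pairs d) = (i < j)%N && (j < d)%N.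
Proof.
elim: d => [|d IH] /=; first by rewrite ltn0 andbF.
rewrite mem_cat IH; apply/idP/idP.
  case/orP => [/andP[ij jd]|/mapP[a]]; first by rewrite ij ltnS ltnW.
  by rewrite mem_iota /= add0n => ad [-> ->]; rewrite ad ltnSn.
case/andP => ij; rewrite ltnS leq_eqVlt => /orP[/eqP jd|jd]; last by rewrite ij jd.
apply/orP; right; apply/mapP; exists i; last by rewrite jd.
by rewrite mem_iota /= add0n -jd.
Qed.

Lemma filter_subs (T : eqType) (p : pred T) (s : seq T) : filter p s \in subs s.
Proof.
elim: s => [|x s IH] //=; rewrite mem_cat; case: (p x); last by rewrite IH.
by rewrite map_f ?orbT.
Qed.

Lemma kdeg_count d (hb : nat -> nat -> bool) :
  (forall i j, hb i j = hb j i) -> (forall i, hb i i = false) ->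
  forall i, (i < d)%N ->
  kdeg [seq p <- pairs d | hb p.1 p.2] i = count (hb i) (iota 0 d).
Proof.
move=> hsym hirr; elim: d => [|d IH] i // hi.
rewrite [pairs _.+1]/=.
rewrite /kdeg filter_cat count_cat -/(kdeg _ i) -addn1 iotaD count_cat /= add0n.
have -> : count (fun p : nat*nat => (p.1 == i) || (p.2 == i))
    [seq p <- [seq (a, d) | a <- iota 0 d] | hb p.1 p.2] =
    count (fun a => hb a d && ((a == i) || (d == i))) (iota 0 d).
  by rewrite count_filter count_map; apply: eq_count => a /=; rewrite andbC.
rewrite addn0.
move: hi; rewrite ltnS leq_eqVlt => /orP[/eqP ->|hi].
  have -> : kdeg [seq p <- pairs d | hb p.1 p.2] d = 0%N.
    apply/eqP; rewrite -leqn0 leqNgt -has_count; apply/hasPn => p.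
    rewrite mem_filter => /andP[_]; case: p => a b; rewrite mem_pairs => /andP[ab bd].
    by rewrite /= !ltn_eqF // (ltn_trans ab bd).
  rewrite hirr addn0 add0n; apply: eq_count => a; rewrite eqxx orbT andbT.
  by rewrite hsym.
rewrite IH //; congr (_ + _)%N.
rewrite (eq_count (a2 := fun a => (a == i) && hb i d)); last first.
  move=> a /=; rewrite [d == i]eq_sym (ltn_eqF hi) orbF; by case: eqP => [->|]; rewrite ?andbT ?andbF.
case: (hb i d); last by rewrite (eq_count (a2 := pred0)) ?count_pred0 // => a; rewrite andbF.
rewrite (eq_count (a2 := pred1 i)) => [|a]; last by rewrite andbT.
by rewrite count_uniq_mem ?iota_uniq // mem_iota /= add0n hi.
Qed.

Lemma intr_natE (n : nat) : ((n%:Z)%:~R : rat) = n%:R.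
Proof. by []. Qed.

Lemma two_le1 (b c a : nat) : b != c -> ((b == a) + (c == a) <= 1)%N.
Proof. move=> bc; case: eqP => [ba|_]; case: eqP => [ca|_] //; by move: bc; rewrite ba ca eqxx. Qed.

Lemma qpairs_lt d p : (d <= 4)%N -> p \in qpairs d -> (p.1 < d)%N && (p.2 < d)%N.
Proof.
case: d => [|[|[|[|[|d]]]]] //= _; rewrite ?inE; try by move/eqP ->.
by case/orP => /eqP ->.
Qed.

Lemma qm_count d (y : nat -> nat) a : (1 <= d <= 4)%N ->
  (forall p, p \in qpairs d -> y p.1 != y p.2) -> (\sum_(k < d) (y k == a) <= uphalf d)%N.
Proof.
case: d => [|[|[|[|[|d]]]]] //= _ hq; rewrite !big_ord_recr big_ord0 /=.
- by case: (y 0%N == a).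
- by have := two_le1 a (hq (0, 1)%N (mem_head _ _)).
- have /= := two_le1 a (hq (0, 1)%N (mem_head _ _)); case: (y 2 == a); lia.
- have /= := two_le1 a (hq (0, 1)%N (mem_head _ _)).
  have h23 : ((2, 3)%N \in qpairs 4) by rewrite !inE eqxx orbT.
  have /= := two_le1 a (hq _ h23); lia.
Qed.

Lemma local d (hd : (1 <= d <= 4)%N) (hb : nat -> nat -> bool)
  (hsym : forall i j, hb i j = hb j i) (hirr : forall i, hb i i = false)
  (sg : nat -> nat) (L : nat -> {set 'I_8})
  (hL : forall i, (i < d)%N -> (3 + count (hb i) (iota 0 d) <= #|L i|)%N) :
  exists y : nat -> nat,
  [/\ forall i, (i < d)%N -> exists o : 'I_8, o \in L i /\ y i = o,
      forall i j, (i < d)%N -> (j < d)%N -> hb i j -> (sg i + y i)%N != (sg j + y j)%N,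
      (2 <= d)%N -> forall i, (i < d)%N -> (\sum_(k < d) y k)%N != (sg i + y i)%N
    & forall a, (\sum_(k < d) (y k == a) <= uphalf d)%N]%N.
Proof.
have hc := check_all hd; rewrite /checkd allLE in hc.
set E := [seq p <- pairs d | hb p.1 p.2].
have := allP hc E (filter_subs _ _); rewrite hasLE => /hasP [ts _].
rewrite /okt; case: ifP => // /and3P [/eqP hsz /allP hle /eqP hsum] hcoef.
set t := nth 0%N ts.
have hkd : forall i, (i < d)%N -> (t i <= 2 + count (hb i) (iota 0 d))%N.
  move=> i hi; rewrite -kdeg_count //; apply: hle; by rewrite mem_iota.
pose S (i : 'I_d) : {set 'I_8} := [set x in take (t i).+1 (enum (L i))].
have hS : forall i : 'I_d, #|S i| = (t i).+1.
  move=> i; have u : uniq (take (t i).+1 (enum (L i))) by rewrite take_uniq ?enum_uniq.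
  rewrite cardsE (card_uniqP u) size_takel // -cardE; apply: leq_trans (hL i (ltn_ord i)).
  have := hkd i (ltn_ord i); lia.
pose F := [seq (vcoef d i, (sg i)%:Z) | i <- vidx d] ++
          [seq (ecoef d p, (sg p.2)%:Z - (sg p.1)%:Z) | p <- E] ++
          [seq (ecoef d p, 0) | p <- qpairs d].
have hmap : map fst F = fms d E by rewrite !map_cat -!map_comp.
have hsF : size F = (\sum_(i < d) t i)%N.
  rewrite -(size_map fst) hmap -hsum sumnE (big_nth 0%N) big_mkord hsz.
  by [].
have hc0 : coef d (map fst F) t != 0 by rewrite hmap.
have [f [hfS hall]] := CN hS hsF hc0.
pose y k := if insub k is Some i then nat_of_ord (f i) else 0%N.
have yE : forall i : 'I_d, y i = f i by move=> i; rewrite /y valK.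
have sum_ind : forall a, (a < d)%N ->
    \sum_(k < d) ((((nat_of_ord k == a) : nat)%:Z)%:~R : rat) * (f k : nat)%:R = (y a)%:R.
  move=> a ha; rewrite (bigD1 (Ordinal ha)) //= eqxx mul1r big1 ?addr0.
    by rewrite -(yE (Ordinal ha)).
  move=> k; rewrite -val_eqE /= => /negPf ->; by rewrite mul0r.
have ecoefE : forall p, (p.1 < d)%N -> (p.2 < d)%N ->
    \sum_(k < d) ((nth 0 (ecoef d p) k)%:~R : rat) * (f k : nat)%:R = (y p.1)%:R - (y p.2)%:R.
  move=> p h1 h2; rewrite -(sum_ind _ h1) -(sum_ind _ h2) -sumrB; apply: eq_bigr => k _.
  rewrite (nth_map 0%N) ?size_iota // nth_iota // add0n intrB mulrBl //.
have vcoefE : forall i, (i < d)%N ->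
    \sum_(k < d) ((nth 0 (vcoef d i) k)%:~R : rat) * (f k : nat)%:R =
    (\sum_(k < d) y k)%:R - (y i)%:R.
  move=> i hi; rewrite -(sum_ind _ hi) natr_sum -sumrB; apply: eq_bigr => k _.
  rewrite (nth_map 0%N) ?size_iota // nth_iota // add0n yE.
  by case: eqP => _ /=; rewrite ?mul1r ?mul0r ?subr0 ?subrr.
have hallF : forall c, c \in F -> ell c f != 0 by apply/allP.
have edge : forall i j, (i < j)%N -> (j < d)%N -> hb i j -> (sg i + y i)%N != (sg j + y j)%N.
  move=> i j ij jd hij.
  have hin : (ecoef d (i, j), (sg j)%:Z - (sg i)%:Z) \in F.
    rewrite mem_cat orbC mem_cat; apply/orP; left; apply/orP; left.
    by apply: (map_f (fun p => (ecoef d p, (sg p.2)%:Z - (sg p.1)%:Z))); rewrite mem_filter /= hij mem_pairs ij jd.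
  have := hallF _ hin; rewrite /ell /= ecoefE //= ?(ltn_trans ij jd) //.
  apply: contra => /eqP h; apply/eqP.
  have : (((sg i + y i)%N)%:R : rat) = ((sg j + y j)%N)%:R by rewrite h.
  rewrite !natrD intrB !intr_natE => h'; lra.
exists y; split.
- move=> i hi; exists (f (Ordinal hi)); split; last exact: (yE (Ordinal hi)).
  by move: (hfS (Ordinal hi)); rewrite inE => /mem_take; rewrite mem_enum.
- move=> i j hi hj hij; case: (ltngtP i j) => [ij|ji|eij].
  + exact: edge.
  + by rewrite eq_sym; apply: edge => //; rewrite hsym.
  + by move: hij; rewrite eij hirr.
- move=> d2 i hi.
  have hin : (vcoef d i, (sg i)%:Z) \in F.
    rewrite mem_cat; apply/orP; left.
    by apply: (map_f (fun i => (vcoef d i, (sg i)%:Z))); rewrite /vidx d2 mem_iota.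
  have := hallF _ hin; rewrite /ell /= vcoefE //.
  apply: contra => /eqP h; apply/eqP.
  have : ((\sum_(k < d) y k)%:R : rat) = ((sg i + y i)%N)%:R by rewrite h.
  rewrite natrD intr_natE => h'; lra.
- have qm : forall p, p \in qpairs d -> y p.1 != y p.2.
    move=> p hp.
    have hpd := qpairs_lt (proj2 (andP hd)) hp.
    have hin : (ecoef d p, 0 : int) \in F.
      by rewrite !mem_cat; apply/orP; right; apply/orP; right; apply: (map_f (fun p => (ecoef d p, 0 : int))).
    have := hallF _ hin; rewrite /ell /= ecoefE; try by case/andP: hpd.
    apply: contra => /eqP h; apply/eqP; rewrite h subrr subr0 //.
  by move=> a; apply: qm_count.
Qed.

End CNpart.

Module GluePart.

Section Glue.
Variable T : finType.

Lemma card_sum (A : {set T}) (Q : pred T) : #|[set u in A | Q u]| = \sum_(u in A) (Q u : nat).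
Proof.
rewrite -sum1_card big_mkcond /= [RHS]big_mkcond; apply: eq_bigr => u _.
by rewrite inE; case: (u \in A); case: (Q u).
Qed.

Lemma count_iota_sum (p : pred nat) d : count p (iota 0 d) = \sum_(k < d) (p k : nat).
Proof.
elim: d => [|d IH]; first by rewrite big_ord0.
by rewrite big_ord_recr -IH -[X in iota 0 X]addn1 iotaD count_cat /= addn0.
Qed.

Lemma sum_enum (A : {set T}) (x0 : T) (F : T -> nat) :
  \sum_(u in A) F u = \sum_(k < #|A|) F (nth x0 (enum A) k).
Proof. by rewrite -big_enum (big_nth x0) big_mkord cardE. Qed.

Lemma uphalf_mono m n : m <= n -> uphalf m <= uphalf n.
Proof. move=> h; rewrite !uphalf_half; lia. Qed.

End Glue.


Section Step.
Variable T : finType.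
Variable e : rel T.
Hypothesis esym : symmetric e.
Hypothesis eirr : irreflexive e.
Hypothesis hmax : max_degree_le e 4.
Variable v : T.
Hypothesis hdv : 0 < deg e v.

Definition rm : rel T := [rel a b | [&& e a b, a != v & b != v]].

Variable c' : T -> T -> nat.
Hypothesis hk' : is_k_edge_coloring rm 7 c'.
Hypothesis hq' : quasi_majority rm c'.
Hypothesis hn' : forall a b, rm a b -> ~~((deg rm a == 1) && (deg rm b == 1)) ->
  sigma_c rm c' a != sigma_c rm c' b.

Definition N := nbhd e v.
Definition g k := nth v (enum N) k.
Definition sg' := sigma_c rm c'.

Lemma inN u : (u \in N) = e v u. Proof. by rewrite inE. Qed.
Lemma vN : v \notin N. Proof. by rewrite inN eirr. Qed.
Lemma sizeN : size (enum N) = #|N|. Proof. by rewrite cardE. Qed.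
Lemma gN k : k < #|N| -> g k \in N.
Proof. by move=> hk; rewrite -mem_enum mem_nth // sizeN. Qed.
Lemma gidx u : u \in N -> index u (enum N) < #|N| /\ g (index u (enum N)) = u.
Proof. by move=> uN; rewrite -sizeN index_mem mem_enum /g nth_index ?mem_enum. Qed.
Lemma idxg k : k < #|N| -> index (g k) (enum N) = k.
Proof. by move=> hk; rewrite index_uniq ?enum_uniq ?sizeN. Qed.
Lemma Nneqv u : u \in N -> u != v.
Proof. by move=> uN; apply: contraNneq vN => <-. Qed.

Lemma card_all (P : pred T) : #|[set w | P w]| = \sum_w (P w : nat).
Proof.
rewrite -sum1_card big_mkcond /=; apply: eq_bigr => w _; rewrite inE; by case: (P w).
Qed.

Lemma deg_split u : u \in N ->
  deg e u = #|[set w | e u w & (w != v) && (w \notin N)]| + #|[set w in N | e u w]| + 1.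
Proof.
move=> uN; have h1 : \sum_w ((w == v) : nat) = 1.
  by rewrite (bigD1 v) //= eqxx big1 // => w /negPf ->.
rewrite /deg /nbhd !card_all -h1.
rewrite -!big_split /=; apply: eq_bigr => w _.
case: (eqVneq w v) => [->|wv]; first by rewrite (negPf vN) esym -inN uN.
by case: (boolP (w \in N)) => wN /=; case: (e u w).
Qed.

Lemma deg_rm_lt u : u \in N -> deg rm u < deg e u.
Proof.
move=> uN; apply: proper_card; apply/properP; split.
  by apply/subsetP => w; rewrite !inE => /andP[].
exists v; first by rewrite !inE esym -inN.
by rewrite !inE /rm /= eqxx !andbF.
Qed.

Definition W u := [set w | e u w & (w != v) && (w \notin N)].
Definition Bsum u : {set 'I_8} := [set (inord (sg' w - sg' u) : 'I_8) | w in W u].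
Definition Aset u (a : nat) := [set w | rm u w & c' u w == a].
Definition Bqm u : {set 'I_8} := [set a : 'I_8 | uphalf (deg e u) <= #|Aset u a|].
Definition Lset u : {set 'I_8} := ~: (Bsum u :|: Bqm u :|: [set ord0]).

Lemma le_2uphalf n : n <= uphalf n + uphalf n.
Proof.
rewrite uphalf_half; have h := odd_double_half n; rewrite -addnn in h.
case: (odd n) h => /= h; lia.
Qed.

Lemma Bqm_le1 u : u \in N -> #|Bqm u| <= 1.
Proof.
move=> uN; apply/card_le1P => a; rewrite inE => ha b; rewrite inE.
apply/idP/idP => [hb|/eqP -> //]; apply/negPn/negP => ab.
have disj : Aset u a :&: Aset u b = set0.
  apply/setP => w; rewrite !inE; apply/negP => /andP[/andP[_ /eqP ->] /andP[_ /eqP]].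
  by move/val_inj => ba; move: ab; rewrite ba inE eqxx.
have sub : Aset u a :|: Aset u b \subset nbhd rm u.
  by apply/subsetP => w; rewrite !inE => /orP[]/andP[].
have := subset_leq_card sub; rewrite cardsU disj cards0 subn0.
have := deg_rm_lt uN; rewrite /deg.
have := le_2uphalf (deg e u); rewrite /deg in ha hb *; lia.
Qed.

Lemma Lset_card u : u \in N -> 3 + #|[set w in N | e u w]| <= #|Lset u|.
Proof.
move=> uN; have hc := cardsC (Bsum u :|: Bqm u :|: [set ord0]); rewrite card_ord in hc; rewrite /Lset.
have h1 : #|Bsum u| <= #|W u| by apply: leq_imset_card.
have h2 := Bqm_le1 uN.
have h3 := deg_split uN; have h4 := hmax u.
have h5 : #|Bsum u :|: Bqm u :|: [set ord0]| <= #|Bsum u| + #|Bqm u| + 1.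
  rewrite cardsU cards1; have := cardsU (Bsum u) (Bqm u); lia.
rewrite /W in h1; lia.
Qed.


Lemma count_hb i : count (fun j => e (g i) (g j)) (iota 0 #|N|) = #|[set w in N | e (g i) w]|.
Proof. by rewrite count_iota_sum card_sum (sum_enum N v). Qed.

Variable y : nat -> nat.
Hypothesis hy1 : forall i, i < #|N| -> exists o : 'I_8, o \in Lset (g i) /\ y i = o.
Hypothesis hy2 : forall i j, i < #|N| -> j < #|N| -> e (g i) (g j) ->
  sg' (g i) + y i != sg' (g j) + y j.
Hypothesis hy3 : 2 <= #|N| -> forall i, i < #|N| -> \sum_(k < #|N|) y k != sg' (g i) + y i.
Hypothesis hy4 : forall a, \sum_(k < #|N|) (y k == a) <= uphalf #|N|.

Definition x u := y (index u (enum N)).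
Definition c a b := if a == v then x b else if b == v then x a else c' a b.

Lemma x_props u : u \in N -> exists o : 'I_8, [/\ x u = o, o != ord0, o \notin Bsum u & o \notin Bqm u].
Proof.
move=> uN; have [hi hg] := gidx uN; have [o [hoL ho]] := hy1 hi.
exists o; rewrite /x ho; move: hoL; rewrite hg /Lset !inE !negb_or => /andP[/andP[-> ->] ->].
by [].
Qed.

Lemma x_range u : u \in N -> 1 <= x u <= 7.
Proof.
move=> uN; have [o [-> ho _ _]] := x_props uN.
have := ltn_ord o; move: ho; rewrite -val_eqE /=; lia.
Qed.

Lemma c_col : is_k_edge_coloring e 7 c.
Proof.
move=> a b hab; rewrite /c.
case: (eqVneq a v) => [av|av].
  subst a; have bN : b \in N by rewrite inN.
  by rewrite (negPf (Nneqv bN)); split => //; apply: x_range.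
case: (eqVneq b v) => [bv|bv].
  subst b; have aN : a \in N by rewrite inN esym.
  by rewrite ?eqxx; split => //; apply: x_range.
by apply: hk'; rewrite /rm /= hab av bv.
Qed.

Lemma nbhd_out w : w != v -> w \notin N -> nbhd e w = nbhd rm w.
Proof.
move=> wv wN; apply/setP => u; rewrite !inE /rm /= wv /=.
case: (eqVneq u v) => [->|uv]; last by rewrite andbT.
by rewrite andbF esym -inN (negPf wN).
Qed.

Lemma sigma_out w : w != v -> w \notin N -> sigma_c e c w = sg' w.
Proof.
move=> wv wN; rewrite /sigma_c /sg' /sigma_c -(nbhd_out wv wN); apply: eq_bigr => u.
rewrite inE => hu; rewrite /c (negPf wv).
case: (eqVneq u v) => // uv; by move: hu; rewrite uv esym -inN (negPf wN).
Qed.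

Lemma deg_out w : w != v -> w \notin N -> deg e w = deg rm w.
Proof. by move=> wv wN; rewrite /deg nbhd_out. Qed.

Lemma sigma_in u : u \in N -> sigma_c e c u = sg' u + x u.
Proof.
move=> uN; have uv := Nneqv uN.
rewrite /sigma_c /sg' /sigma_c (bigD1 v) /=; last by rewrite inE esym -inN.
rewrite {1}/c (negPf uv) eqxx addnC; congr (_ + _).
apply: eq_big => [z|z]; first by rewrite !inE /rm /= uv.
by rewrite !inE => /andP[_ zv]; rewrite /c (negPf uv) (negPf zv).
Qed.

Lemma sigma_v : sigma_c e c v = \sum_(k < #|N|) y k.
Proof.
rewrite /sigma_c -/N (sum_enum N v); apply: eq_bigr => k _.
by rewrite /c eqxx /x -/(g k) idxg.
Qed.

Lemma deg_in u : u \in N -> deg e u = (deg rm u).+1.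
Proof.
move=> uN; have uv := Nneqv uN.
rewrite /deg (cardsD1 v) inE esym -inN uN add1n; congr _.+1; apply: eq_card => z.
by rewrite !inE /rm /= uv andbC.
Qed.

Lemma c_qm : quasi_majority e c.
Proof.
move=> w a.
case: (eqVneq w v) => [->|wv].
  have -> : [set u | e v u & c v u == a] = [set u in N | x u == a].
    by apply/setP => u; rewrite !inE /c eqxx.
  rewrite card_sum (sum_enum N v) /deg -/N.
  under eq_bigr do rewrite /x -/(g _) idxg //.
  exact: hy4.
case: (boolP (w \in N)) => wN; last first.
  have -> : [set u | e w u & c w u == a] = [set u | rm w u & c' w u == a].
    apply/setP => u; rewrite !inE /rm /= wv /c (negPf wv).
    case: (eqVneq u v) => [->|uv] /=; last by rewrite andbT.
    by rewrite esym -inN (negPf wN).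
  by rewrite deg_out //; apply: hq'.
have -> : #|[set u | e w u & c w u == a]| = #|Aset w a| + (x w == a).
  rewrite !card_all.
  have h1 : \sum_u ((u == v) && (x w == a) : nat) = (x w == a).
    by rewrite (bigD1 v) //= eqxx big1 ?addn0 // => u /negPf ->.
  rewrite -h1 -big_split /=; apply: eq_bigr => u _.
  rewrite /c (negPf (Nneqv wN)) /rm /= (Nneqv wN).
  case: (eqVneq u v) => [->|uv] /=; first by rewrite esym -inN wN.
  by rewrite andbT addn0.
have [o [xo _ _ hq]] := x_props wN.
case: (eqVneq (x w) a) => [<-|_] /=.
  by move: hq; rewrite xo inE -ltnNge addn1.
rewrite addn0; apply: leq_trans (hq' w a) _; apply: uphalf_mono.
by rewrite deg_in.
Qed.

Lemma sg'_pos u : 0 < deg rm u -> 0 < sg' u.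
Proof.
rewrite /deg card_gt0 => /set0Pn [z hz]; rewrite /sg' /sigma_c (bigD1 z) //=.
have := hk' (_ : rm u z); rewrite inE in hz; case/(_ hz) => _ /andP[h _].
exact: leq_trans h (leq_addr _ _).
Qed.

Lemma nsd_v b : b \in N -> ~~ ((deg e v == 1) && (deg e b == 1)) ->
  sigma_c e c v != sigma_c e c b.
Proof.
move=> bN hdeg; rewrite sigma_v sigma_in //.
have [hi hg] := gidx bN; rewrite /x.
case: (leqP 2 #|N|) => d2.
  by have := hy3 d2 hi; rewrite hg.
have d1 : #|N| = 1 by move: hdv d2; rewrite /deg -/N; lia.
have i0 : index b (enum N) = 0 by move: hi; rewrite d1; lia.
have hdb : deg e b != 1 by move: hdeg; rewrite /deg -/N d1 eqxx.
have pos : 0 < sg' b.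
  apply: sg'_pos; move: hdb; rewrite deg_in //; lia.
rewrite i0; move: pos; rewrite d1 big_ord1 /=; lia.
Qed.

Lemma nsd_in_in a b : a \in N -> b \in N -> e a b -> sigma_c e c a != sigma_c e c b.
Proof.
move=> aN bN hab; rewrite !sigma_in //.
have [ha ga] := gidx aN; have [hb gb] := gidx bN.
by have := hy2 ha hb; rewrite ga gb /x; apply.
Qed.

Lemma nsd_in_out a b : a \in N -> b != v -> b \notin N -> e a b ->
  sigma_c e c a != sigma_c e c b.
Proof.
move=> aN bv bN hab; rewrite sigma_in // sigma_out //.
have [o [xo _ hs _]] := x_props aN.
apply/negP => /eqP heq; case/negP: hs; apply/imsetP; exists b.
  by rewrite inE hab bv bN.
apply: val_inj; rewrite /= inordK; move: heq; rewrite xo; first lia.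
have := ltn_ord o; lia.
Qed.

Lemma nsd_out_out a b : a != v -> a \notin N -> b != v -> b \notin N -> e a b ->
  ~~ ((deg e a == 1) && (deg e b == 1)) -> sigma_c e c a != sigma_c e c b.
Proof.
move=> av aN bv bN hab hd; rewrite !sigma_out //; apply: hn'.
  by rewrite /rm /= hab av bv.
by rewrite -!deg_out.
Qed.

Lemma c_nsd a b : e a b -> ~~ ((deg e a == 1) && (deg e b == 1)) ->
  sigma_c e c a != sigma_c e c b.
Proof.
move=> hab hd.
case: (eqVneq a v) => [av|av].
  by subst a; apply: nsd_v => //; rewrite inN.
case: (eqVneq b v) => [bv|bv].
  subst b; rewrite eq_sym; apply: nsd_v; first by rewrite inN esym.
  by rewrite andbC.
case: (boolP (a \in N)) => aN; case: (boolP (b \in N)) => bN.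
- exact: nsd_in_in.
- exact: nsd_in_out.
- by rewrite eq_sym; apply: nsd_in_out => //; rewrite esym.
- exact: nsd_out_out.
Qed.

End Step.

End GluePart.

Import CNpart GluePart.

Definition prop (T : finType) (e : rel T) (c : T -> T -> nat) :=
  [/\ is_k_edge_coloring e 7 c, quasi_majority e c &
      forall a b, e a b -> ~~ ((deg e a == 1) && (deg e b == 1)) ->
        sigma_c e c a != sigma_c e c b].

Lemma no_edges (T : finType) (e : rel T) : (forall v, deg e v = 0) -> prop e (fun _ _ => 1).
Proof.
move=> h0.
have ne : forall a b, e a b -> False.
  move=> a b hab; have := h0 a; rewrite /deg => /eqP; rewrite cards_eq0 => /eqP/setP/(_ b).
  by rewrite !inE hab.
split.
- by move=> a b /ne.
- move=> v i; apply: leq_trans (_ : 0 <= _) => //; rewrite leqn0 cards_eq0; apply/eqP/setP => u.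
  by rewrite !inE; apply/negP => /andP[/ne].
- by move=> a b /ne.
Qed.

Lemma gen (T : finType) n : forall e : rel T, simple_graph e -> max_degree_le e 4 ->
  #|[set p : T * T | e p.1 p.2]| <= n -> exists c, prop e c.
Proof.
elim: n => [|n IH] e [esym eirr] hmax hcard.
  exists (fun _ _ => 1); apply: no_edges => v; apply/eqP; rewrite cards_eq0.
  apply/eqP/setP => u; rewrite !inE; apply/negP => hvu.
  by move: hcard; rewrite leqn0 cards_eq0 => /eqP/setP/(_ (v, u)); rewrite !inE hvu.
case: (boolP [exists v, 0 < deg e v]) => [/existsP [v hv]|hno]; last first.
  exists (fun _ _ => 1); apply: no_edges => v; apply/eqP; rewrite -leqn0 leqNgt.
  by apply: contra hno => h; apply/existsP; exists v.
have hsimp : simple_graph (rm e v).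
  split; first by move=> a b; rewrite /rm /= esym; case: (a == v); case: (b == v); rewrite ?andbF ?andbT.
  by move=> a; rewrite /rm /= eirr.
have hmax' : max_degree_le (rm e v) 4.
  move=> a; apply: leq_trans (hmax a); apply: subset_leq_card; apply/subsetP => b.
  by rewrite !inE /= => /andP[].
have hcard' : #|[set p : T * T | rm e v p.1 p.2]| <= n.
  rewrite -ltnS; apply: leq_trans hcard; apply: proper_card; apply/properP; split.
    by apply/subsetP => p; rewrite !inE /= => /andP[].
  have : 0 < #|nbhd e v| by [].
  rewrite card_gt0 => /set0Pn [u]; rewrite inE => hvu.
  by exists (v, u); rewrite !inE //= /rm /= eqxx andbF.
have [c' [hk' hq' hn']] := IH _ hsimp hmax' hcard'.
have hd : 1 <= #|N e v| <= 4 by rewrite hv; apply: hmax.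
have hL : forall i, i < #|N e v| ->
    3 + count (fun j => e (g e v i) (g e v j)) (iota 0 #|N e v|) <= #|Lset e v c' (g e v i)|.
  by move=> i hi; rewrite count_hb; apply: Lset_card => //; apply: gN.
have [y [hy1 hy2 hy3 hy4]] := @local #|N e v| hd (fun i j => e (g e v i) (g e v j))
  (fun i j => esym _ _) (fun i => eirr _) (fun i => sg' e v c' (g e v i))
  (fun i => Lset e v c' (g e v i)) hL.
exists (c e v c' y); split.
- exact: c_col.
- exact: c_qm.
- exact: c_nsd.
Qed.

Unset Implicit Arguments.
Theorem mainTheorem3 (T : finType) (e : rel T) :
  simple_graph e -> nice e -> max_degree_le e 4 -> qm_nsd_colorable e 7.
Proof.
move=> hs hn hm.
have [c [hk hq hd]] := gen hs hm (leqnn #|[set p : T * T | e p.1 p.2]|).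
exists c; split => // u w huw; apply/eqP; apply: hd => //.
apply/negP => /andP[/eqP h1 /eqP h2]; exact: hn huw (conj h1 h2).
Qed.
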